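(* Let $\Lambda$ be a finite-dimensional algebra over an algebraically closed field $k$ and let $M_1,M_2$ be finitely generated $\Lambda$-modules. Suppose there is $0\neq\beta\in\mathrm{Hom}_\Lambda(M_2,M_1)$ such that $\alpha\beta=0$ for every $\alpha\in\mathrm{Hom}_\Lambda(M_1,M_2)$. Then $\mathrm{End}_\Lambda(M_1\oplus M_2)$ is not a symmetric algebra.
   Context: An algebra $A$ is symmetric if there is a linear form $\lambda:A\to k$ with $\lambda(ab)=\lambda(ba)$ for all $a,b$ whose kernel contains no nonzero left ideal. *)

(* Defs.v *)
From HB Require Import structures.
From mathcomp Require Import all_boot all_order all_algebra all_field.
Set Implicit Arguments. Unset Strict Implicit. Unset Printing Implicit Defensive.
Import GRing.Theory.
Local Open Scope ring_scope.

(* A finitely generated (left) Lambda-module (equivalently, since Lambda is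
   finite dimensional, a finite-dimensional left module) of k-dimension n is
   given by a representation rho : Lambda -> 'M[k]_n acting on column vectors
   'cV_n by  a . v := rho a *m v. *)

Definition is_rep (k : fieldType) (L : falgType k) (n : nat)
  (rho : L -> 'M[k]_n) : Prop :=
  [/\ (forall (c : k) (a b : L), rho (c *: a + b) = c *: rho a + rho b),
      rho 1 = 1%:M
    & (forall a b : L, rho (a * b) = rho a *m rho b)].

(* f : 'M_(n, m) is a Lambda-linear map from the module (m, rhoM) to the
   module (n, rhoN), acting on column vectors v |-> f *m v. *)
Definition is_hom (k : fieldType) (L : falgType k) (m n : nat)
  (rhoM : L -> 'M[k]_m) (rhoN : L -> 'M[k]_n) (f : 'M[k]_(n, m)) : Prop :=
  forall a : L, f *m rhoM a = rhoN a *m f.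

Definition rep_sum (k : fieldType) (L : falgType k) (n1 n2 : nat)
  (rho1 : L -> 'M[k]_n1) (rho2 : L -> 'M[k]_n2) : L -> 'M[k]_(n1 + n2) :=
  fun a => block_mx (rho1 a) 0 0 (rho2 a).

Definition End_alg (k : fieldType) (L : falgType k) (n : nat)
  (rho : L -> 'M[k]_n) : 'M[k]_n -> Prop :=
  fun X => is_hom rho rho X.

Definition left_ideal (k : fieldType) (n : nat) (A I : 'M[k]_n -> Prop) : Prop :=
  [/\ (forall x, I x -> A x), I 0,
      (forall x y, I x -> I y -> I (x - y))
    & (forall a x, A a -> I x -> I (a *m x))].

(* A (unital subalgebra of 'M_n) is symmetric: there is a linear form lam on A
   with lam(ab) = lam(ba) whose kernel contains no nonzero left ideal.
   lam is given as a function on 'M_n, only its values on A matter. *)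
Definition is_symmetric_alg (k : fieldType) (n : nat) (A : 'M[k]_n -> Prop) : Prop :=
  exists lam : 'M[k]_n -> k,
    [/\ (forall (c : k) x y, A x -> A y -> lam (c *: x + y) = c * lam x + lam y),
        (forall x y, A x -> A y -> lam (x *m y) = lam (y *m x))
      & (forall I, left_ideal A I -> (forall x, I x -> lam x = 0) ->
           forall x, I x -> x = 0)].

(* Main.v *)
Require Import Defs.
From HB Require Import structures.
From mathcomp Require Import all_boot all_order all_algebra all_field.
Local Open Scope ring_scope.
Import GRing.Theory.

Theorem lemma4p1 (k : closedFieldType) (L : falgType k) (n1 n2 : nat)
  (rho1 : L -> 'M[k]_n1) (rho2 : L -> 'M[k]_n2) :
  is_rep rho1 -> is_rep rho2 ->
  forall beta : 'M[k]_(n1, n2),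
    is_hom rho2 rho1 beta -> beta != 0 ->
    (forall alpha : 'M[k]_(n2, n1), is_hom rho1 rho2 alpha -> alpha *m beta = 0) ->
    ~ is_symmetric_alg (End_alg (rep_sum rho1 rho2)).
Proof.
move=> _ _ beta hb bnz hann [lam [lin tr ker]].
set rS := rep_sum rho1 rho2.
pose C : 'M[k]_(n1 + n2, n1) := col_mx 1%:M 0.
pose Ct : 'M[k]_(n1 + n2, n2) := col_mx 0 1%:M.
pose R : 'M[k]_(n2, n1 + n2) := row_mx 0 1%:M.
pose Rl : 'M[k]_(n1, n1 + n2) := row_mx 1%:M 0.
have hC a : rS a *m C = C *m rho1 a.
  by rewrite /rS /rep_sum /C mul_block_col mul_col_mx !mulmx1 !mulmx0 mul0mx !addr0 mul1mx.
have hCt a : rS a *m Ct = Ct *m rho2 a.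
  by rewrite /rS /rep_sum /Ct mul_block_col mul_col_mx !mulmx1 !mulmx0 !mul0mx !add0r mul1mx.
have hR a : R *m rS a = rho2 a *m R.
  by rewrite /rS /rep_sum /R mul_row_block mul_mx_row !mulmx1 !mulmx0 !mul0mx !add0r mul1mx.
have RCt : R *m Ct = 1%:M by rewrite /R /Ct mul_row_col mul0mx add0r mulmx1.
have RlC : Rl *m C = 1%:M by rewrite /Rl /C mul_row_col mul0mx addr0 mulmx1.
have RlCt : Rl *m Ct = 0 by rewrite /Rl /Ct mul_row_col mul0mx addr0 mulmx0.
have RC : R *m C = 0 by rewrite /R /C mul_row_col mul0mx add0r mulmx0.
pose B := C *m beta *m R.
pose e2 := Ct *m R.
have EB : End_alg rS B.
  move=> a; rewrite /B -!mulmxA hR !mulmxA hC; congr (_ *m _).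
  by rewrite -!mulmxA hb.
have Ee2 : End_alg rS e2.
  by move=> a; rewrite /e2 -mulmxA hR !mulmxA hCt.
have Bnz : B != 0.
  apply: contraNneq bnz => B0.
  have : Rl *m B *m Ct = beta by rewrite /B !mulmxA RlC mul1mx -mulmxA RCt mulmx1.
  by rewrite B0 mulmx0 mul0mx => <-.
have Ehom X Y : End_alg rS X -> End_alg rS Y -> End_alg rS (X *m Y).
  by move=> hX hY a; rewrite -mulmxA hY !mulmxA hX.
have lam0 : lam 0 = 0.
  have h0 : End_alg rS 0 by move=> a; rewrite mulmx0 mul0mx.
  have := lin 1 0 0 h0 h0; rewrite scale1r addr0 mul1r => h.
  by apply: (@addrI _ (lam 0)); rewrite addr0 -h.
pose I := fun x : 'M[k]_(n1 + n2) => exists X, End_alg rS X /\ x = X *m B.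
have hI : left_ideal (End_alg rS) I.
  split.
  - by move=> x [X [hX ->]]; apply: Ehom.
  - exists 0; split; last by rewrite mul0mx.
    by move=> a; rewrite mulmx0 mul0mx.
  - move=> x y [X [hX ->]] [Y [hY ->]]; exists (X - Y); split; last by rewrite mulmxBl.
    by move=> a; rewrite mulmxBl mulmxBr hX hY.
  - move=> a x ha [X [hX ->]]; exists (a *m X); split; last by rewrite mulmxA.
    exact: Ehom.
move/eqP: Bnz; apply; apply: (ker I hI) => [x [X [hX ->]]|]; last first.
  by exists 1%:M; split; [move=> a; rewrite mulmx1 mul1mx | rewrite mul1mx].
have XBe : X *m B *m e2 = X *m B.
  by rewrite /B /e2 -!mulmxA (mulmxA R Ct) RCt mul1mx.
rewrite -XBe tr; [|exact: Ehom|exact: Ee2].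
pose alpha := R *m X *m C.
have ha : is_hom rho1 rho2 alpha.
  move=> a; rewrite /alpha -!mulmxA -hC !mulmxA -hR -!mulmxA; congr (_ *m _).
  by rewrite !mulmxA hX.
have : e2 *m (X *m B) = Ct *m (alpha *m beta) *m R.
  by rewrite /e2 /B /alpha !mulmxA.
by rewrite hann // mulmx0 mul0mx => ->.
Qed.
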